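(* Let $E$ be a congruence on $\overline{\boldsymbol{T}(X_1,\ldots,X_n)}$, $F$ a congruence on $\overline{\boldsymbol{T}(Y_1,\ldots,Y_m)}$, $V:=\boldsymbol{V}(E)$, $W:=\boldsymbol{V}(F)$, and let $\psi:\overline{\boldsymbol{T}(X_1,\ldots,X_n)}/E\to\overline{\boldsymbol{T}(Y_1,\ldots,Y_m)}/F$ be a $\boldsymbol{T}$-algebra homomorphism. For every $f\in\overline{\boldsymbol{T}(X_1,\ldots,X_n)}/E$: (1) $\sup\{f(x)\mid x\in V\}\ge\sup\{\psi(f)(y)\mid y\in W\}$; (2) $\inf\{f(x)\mid x\in V\}\le\inf\{\psi(f)(y)\mid y\in W\}$. Moreover, if $W$ is nonempty, $\psi$ is injective and $F=\boldsymbol{E}(W)$, then equality holds in both (1) and (2).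
   Context: $\boldsymbol{T}=\mathbb{R}\cup\{-\infty\}$ with $a\oplus b=\max\{a,b\}$, $a\odot b=a+b$. $\overline{\boldsymbol{T}[X_1,\ldots,X_n]}$ is the tropical polynomial semiring modulo identifying polynomials defining the same function $\boldsymbol{T}^n\to\boldsymbol{T}$; it is cancellative and $\overline{\boldsymbol{T}(X_1,\ldots,X_n)}$ is its semifield of fractions. Each element defines a function $\mathbb{R}^n\to\boldsymbol{T}$ (quotients evaluated as differences). $\boldsymbol{T}$-algebras are semirings with a semiring homomorphism from $\boldsymbol{T}$; homomorphisms are compatible semiring homomorphisms. A congruence is an equivalence relation compatible with both operations. $\boldsymbol{V}(E)=\{x\in\mathbb{R}^n\mid f(x)=g(x)\ \forall(f,g)\in E\}$; for $W\subset\mathbb{R}^m$, $\boldsymbol{E}(W)=\{(f,g)\mid f(y)=g(y)\ \forall y\in W\}$. An element of the quotient by $E$ (resp. $F$) is evaluated at points of $\boldsymbol{V}(E)$ (resp. $\boldsymbol{V}(F)$) via any representative; suprema and infima are taken in $\boldsymbol{T}\cup\{+\infty\}$. *)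

(* Defs.v *)
From HB Require Import structures.
From mathcomp Require Import all_boot all_order all_algebra.
From mathcomp Require Import all_classical all_reals.
From mathcomp Require Import ereal Rstruct.
From Stdlib Require Rdefinitions.
Notation R := Rdefinitions.R.
Set Implicit Arguments. Unset Strict Implicit. Unset Printing Implicit Defensive.
Import Order.TTheory GRing.Theory Num.Theory.
Local Open Scope ring_scope.
Local Open Scope ereal_scope.
Local Open Scope classical_set_scope.

(* The tropical semifield T = R ∪ {-oo} is realised inside \bar R (no +oo is
   ever used as a value of T); ⊕ = max, ⊙ = +. Points of R^n are 'I_n -> R. *)
Definition pt (n : nat) := 'I_n -> R.
Definition tfun (n : nat) := pt n -> \bar R.

Definition is_trop_scalar (c : \bar R) : Prop := c <> +oo.

Definition trop_poly (n : nat) (p : tfun n) : Prop :=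
  exists s : seq (R * ('I_n -> nat)),
    forall x : pt n,
      p x = \big[maxe/-oo]_(m <- s) ((m.1 + \sum_(i < n) ((m.2 i)%:R * x i))%R)%:E.

(* elements of the semifield of fractions of \bar{T[X_1..X_n]}, as functions
   R^n -> T : p/q with q a nonzero tropical polynomial, evaluated as p - q.
   Two fractions are equal in the semifield iff they define the same function. *)
Definition trop_rat (n : nat) (f : tfun n) : Prop :=
  exists p q : tfun n, [/\ trop_poly p, trop_poly q, q <> (fun _ => -oo)
                         & forall x, f x = p x - q x].

Definition tadd (n : nat) (f g : tfun n) : tfun n := fun x => maxe (f x) (g x).
Definition tmul (n : nat) (f g : tfun n) : tfun n := fun x => f x + g x.
Definition tcst (n : nat) (c : \bar R) : tfun n := fun _ => c.

Definition congruence (n : nat) (E : tfun n -> tfun n -> Prop) : Prop :=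
  (forall f g, E f g -> trop_rat f /\ trop_rat g) /\
  [/\ (forall f, trop_rat f -> E f f),
      (forall f g, E f g -> E g f),
      (forall f g h, E f g -> E g h -> E f h),
      (forall f f' g g', E f f' -> E g g' -> E (tadd f g) (tadd f' g'))
    & (forall f f' g g', E f f' -> E g g' -> E (tmul f g) (tmul f' g'))].

Definition tvar (n : nat) (E : tfun n -> tfun n -> Prop) : set (pt n) :=
  [set x | forall f g, E f g -> f x = g x].

Definition tideal (m : nat) (W : set (pt m)) : tfun m -> tfun m -> Prop :=
  fun f g => [/\ trop_rat f, trop_rat g & forall y, W y -> f y = g y].

(* A T-algebra homomorphism psi : \bar{T(X)}/E -> \bar{T(Y)}/F, given by a map
   phi on representatives (phi f is a representative of psi [f]). *)
Definition talg_hom_quot (n m : nat) (E : tfun n -> tfun n -> Prop)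
    (F : tfun m -> tfun m -> Prop) (phi : tfun n -> tfun m) : Prop :=
  [/\ (forall f, trop_rat f -> trop_rat (phi f)),
      (forall f g, E f g -> F (phi f) (phi g)),
      (forall f g, trop_rat f -> trop_rat g ->
          F (phi (tadd f g)) (tadd (phi f) (phi g))),
      (forall f g, trop_rat f -> trop_rat g ->
          F (phi (tmul f g)) (tmul (phi f) (phi g)))
    & (forall c, is_trop_scalar c -> F (phi (@tcst n c)) (@tcst m c))].

Definition hom_quot_injective (n m : nat) (E : tfun n -> tfun n -> Prop)
    (F : tfun m -> tfun m -> Prop) (phi : tfun n -> tfun m) : Prop :=
  forall f g, trop_rat f -> trop_rat g -> F (phi f) (phi g) -> E f g.

(* Main.v *)
Require Import Defs.
From HB Require Import structures.
From mathcomp Require Import all_boot all_order all_algebra.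
From mathcomp Require Import all_classical all_reals.
From mathcomp Require Import ereal Rstruct.
From mathcomp Require Import ring.
Import Order.TTheory GRing.Theory Num.Theory.
Local Open Scope ereal_scope.
Local Open Scope classical_set_scope.
Set Implicit Arguments. Unset Strict Implicit.

Definition bm (n : nat) (s : seq (R * ('I_n -> nat))) (x : pt n) : \bar R :=
  \big[maxe/-oo]_(m <- s) ((m.1 + \sum_(i < n) ((m.2 i)%:R * x i))%R)%:E.

Definition mono (n : nat) (c : R) (a : 'I_n -> nat) : tfun n :=
  fun x => ((c + \sum_(i < n) ((a i)%:R * x i))%R)%:E.

Definition Xf (n : nat) (i : 'I_n) : tfun n := fun x => (x i)%:E.

Lemma bm_fin n (s : seq (R * ('I_n -> nat))) x :
  s = [::] \/ exists r, bm s x = r%:E.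
Proof.
elim: s => [|m s IH]; first by left.
right; rewrite /bm big_cons -/(bm s x).
case: IH => [->|[r ->]]; first by rewrite /bm big_nil maxeNy; eexists.
by rewrite -EFin_max; eexists.
Qed.

Lemma tp_cases n (p : tfun n) : trop_poly p ->
  (p = fun _ => -oo) \/ (forall x, exists r, p x = r%:E).
Proof.
move=> [s hs]; case: s hs => [|m s] hs.
  by left; apply: funext => x; rewrite hs big_nil.
right => x; rewrite hs -/(bm (m :: s) x).
by case: (bm_fin (m :: s) x).
Qed.

Lemma rat_decomp n (f : tfun n) : trop_rat f ->
  exists p q : tfun n, [/\ trop_poly p, trop_poly q,
    (forall x, exists r, q x = r%:E) & forall x, f x = p x - q x].
Proof.
move=> [p [q [hp hq hq0 hf]]]; exists p, q; split => //.
by case: (tp_cases hq).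
Qed.

Lemma poly_noninf n (p : tfun n) : trop_poly p -> forall x, p x = -oo \/ exists r, p x = r%:E.
Proof. by move=> hp x; case: (tp_cases hp) => [->|h]; [left|right]. Qed.

Lemma rat_noninf n (f : tfun n) : trop_rat f -> forall x, f x <> +oo.
Proof.
move=> /rat_decomp [p [q [hp hq hqr hf]]] x; rewrite hf.
have [r ->] := hqr x.
by case: (poly_noninf hp x) => [->|[u ->]].
Qed.

Lemma zero_poly n : trop_poly (fun _ : pt n => 0).
Proof.
exists [:: (0%R, fun _ => 0%N)] => x.
rewrite big_cons big_nil maxeNy /= big1 ?add0r // => i _.
by rewrite mul0r.
Qed.

Lemma pt0_ex n : pt n. Proof. exact: (fun _ => 0%R). Qed.

Lemma poly_rat n (p : tfun n) : trop_poly p -> trop_rat p.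
Proof.
move=> hp; exists p, (fun _ => 0); split => //; first exact: zero_poly.
  by move=> /(congr1 (fun h => h (@pt0_ex n))).
by move=> x; rewrite sube0.
Qed.

Lemma mono_poly n c (a : 'I_n -> nat) : trop_poly (mono c a).
Proof. by exists [:: (c, a)] => x; rewrite big_cons big_nil maxeNy. Qed.

Lemma mono0 n c : mono c (fun _ : 'I_n => 0%N) = @tcst n c%:E.
Proof.
apply: funext => x; rewrite /mono /tcst big1 ?addr0 // => i _.
by rewrite mul0r.
Qed.

Lemma cst_poly n c : c <> +oo -> trop_poly (@tcst n c).
Proof.
case: c => [r| |] // _.
  by rewrite -mono0; apply: mono_poly.
by exists [::] => x; rewrite big_nil.
Qed.

Lemma cst_rat n c : c <> +oo -> trop_rat (@tcst n c).
Proof. by move=> h; apply: poly_rat; apply: cst_poly. Qed.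

Lemma Xf_mono n (i : 'I_n) : Xf i = mono 0%R (fun j => (j == i) : nat).
Proof.
apply: funext => x; rewrite /Xf /mono add0r (bigD1 i) //= eqxx mul1r big1 ?addr0 //.
by move=> j /negbTE ->; rewrite mul0r.
Qed.

Lemma Xf_rat n (i : 'I_n) : trop_rat (Xf i).
Proof. by rewrite Xf_mono; apply: poly_rat; apply: mono_poly. Qed.

Lemma Xinv_rat n (i : 'I_n) : trop_rat (fun x : pt n => (- x i)%:E).
Proof.
exists (@tcst n 0), (Xf i); split.
- exact: cst_poly.
- by rewrite Xf_mono; apply: mono_poly.
- by move=> /(congr1 (fun h => h (@pt0_ex n))).
- by move=> x; rewrite /tcst /Xf sub0e.
Qed.

Lemma bigmax_cat n (s1 s2 : seq (R * ('I_n -> nat))) (G : R * ('I_n -> nat) -> \bar R) :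
  \big[maxe/-oo]_(m <- s1 ++ s2) G m =
  maxe (\big[maxe/-oo]_(m <- s1) G m) (\big[maxe/-oo]_(m <- s2) G m).
Proof.
elim: s1 => [|a s1 IH]; first by rewrite big_nil maxNye.
by rewrite cat_cons !big_cons IH maxA.
Qed.

Lemma bigmax_addl n (s : seq (R * ('I_n -> nat))) (G : R * ('I_n -> nat) -> \bar R) (r : R) :
  r%:E + \big[maxe/-oo]_(m <- s) G m = \big[maxe/-oo]_(m <- s) (r%:E + G m).
Proof.
elim: s => [|a s IH]; first by rewrite !big_nil.
by rewrite !big_cons adde_maxr IH.
Qed.

Lemma tadd_cst_rat n (f : tfun n) c : trop_rat f -> c <> +oo -> trop_rat (tadd f (@tcst n c)).
Proof.
move=> hf; case: c => [r| |] // _; last first.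
  by have -> : tadd f (@tcst n -oo) = f by apply: funext => x; rewrite /tadd /tcst maxeNy.
case: hf => [p [q [[sp hp] [sq hq] hq0 hf]]].
have hqr : forall x, exists u, q x = u%:E.
  by case: (tp_cases (ex_intro _ sq hq)).
exists (fun x => maxe (p x) (r%:E + q x)), q; split => //.
- exists (sp ++ map (fun m => (r + m.1, m.2)%R) sq) => x.
  rewrite bigmax_cat big_map hp hq bigmax_addl; congr maxe.
  by apply: eq_bigr => m _ /=; rewrite -EFinD addrA.
- by exists sq.
- move=> x; rewrite /tadd /tcst hf; have [s ->] := hqr x.
  case: (p x) => [u| |] //=.
  + rewrite -!EFin_max -!EFinD; congr EFin.
    by rewrite addr_maxl addrK.
  + by rewrite /= !maxNye -EFinD addrK.
Qed.

Lemma fin_sum0 (a b : \bar R) : a + b = 0 -> exists r, a = r%:E.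
Proof. by case: a => [r| |]; case: b => [s| |] //; eexists. Qed.

Lemma eval_point n m (E : tfun n -> tfun n -> Prop) (F : tfun m -> tfun m -> Prop)
    (phi : tfun n -> tfun m) :
  congruence E -> talg_hom_quot E F phi -> forall y, tvar F y ->
  exists t, tvar E t /\ forall f, trop_rat f -> phi f y = f t.
Proof.
move=> [cE _] [phirat phiE phiadd phimul phicst] y Wy.
have Fy : forall a b, F a b -> a y = b y by move=> a b /Wy.
have hX : forall i, exists r, phi (Xf i) y = r%:E.
  move=> i; apply: (@fin_sum0 _ (phi (fun x : pt n => (- x i)%:E) y)).
  have := Fy _ _ (phimul _ _ (Xf_rat i) (Xinv_rat i)).
  have -> : tmul (Xf i) (fun x : pt n => (- x i)%:E) = @tcst n 0.
    by apply: funext => x; rewrite /tmul /Xf -EFinD subrr.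
  rewrite (Fy _ _ (phicst 0 _)) // /tmul /tcst => <-.
pose t : pt n := fun i => fine (phi (Xf i) y).
have ht : forall i, phi (Xf i) y = (t i)%:E.
  by move=> i; rewrite /t; have [r ->] := hX i.
pose Good (g : tfun n) := phi g y = g t.
have gadd : forall f g, trop_rat f -> trop_rat g -> Good f -> Good g -> Good (tadd f g).
  by move=> f g hf hg Gf Gg; rewrite /Good (Fy _ _ (phiadd _ _ hf hg)) /tadd Gf Gg.
have gmul : forall f g, trop_rat f -> trop_rat g -> Good f -> Good g -> Good (tmul f g).
  by move=> f g hf hg Gf Gg; rewrite /Good (Fy _ _ (phimul _ _ hf hg)) /tmul Gf Gg.
have gcst : forall c, c <> +oo -> Good (@tcst n c).
  by move=> c hc; rewrite /Good (Fy _ _ (phicst _ hc)).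
have gX : forall i, Good (Xf i) by move=> i; rewrite /Good ht.
have gmono : forall k c (a : 'I_n -> nat), (\sum_i a i)%N = k -> Good (mono c a).
  elim=> [|k IH] c a hk.
    have -> : a = fun _ => 0%N.
      apply: funext => i; apply/eqP.
      by move: hk => /eqP; rewrite sum_nat_eq0 => /forallP /(_ i).
    by rewrite mono0; apply: gcst.
  case: (pickP (fun j => 0 < a j)%N) => [j hj|h0]; last first.
    move: hk; rewrite big1 // => i _; apply/eqP; rewrite -leqn0 leqNgt.
    by rewrite h0.
  pose a' := fun i => if i == j then (a j).-1 else a i.
  have hsum : forall (G : nat -> R) (x : pt n), (\sum_i G (a i) * x i =
       \sum_i G (a' i) * x i + (G (a j) - G (a j).-1) * x j)%R.
    move=> G x; rewrite (bigD1 j) //= [in RHS](bigD1 j) //= /a' eqxx.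
    have e : (\sum_(i < n | i != j) G (if i == j then (a j).-1 else a i) * x i =
      \sum_(i < n | i != j) G (a i) * x i)%R.
      by apply: eq_bigr => i /negbTE ->.
    rewrite e; ring.
  have hk' : (\sum_i a' i)%N = k.
    move: hk; rewrite (bigD1 j) //= [in X in _ -> X](bigD1 j) //= /a' eqxx.
    have e : (\sum_(i < n | i != j) (if i == j then (a j).-1 else a i) =
      \sum_(i < n | i != j) a i)%N.
      by apply: eq_bigr => i /negbTE ->.
    rewrite e; move: hj; case: (a j) => [|aj] //= _.
    by rewrite addSn => -[].
  have -> : mono c a = tmul (mono c a') (Xf j).
    apply: funext => x; rewrite /mono /tmul /Xf -EFinD (hsum (fun k : nat => (k%:R)%R)).
    by rewrite addrA -natrB ?leq_pred // -subn1 subKn // mul1r.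
  apply: gmul; [apply: poly_rat; apply: mono_poly | exact: Xf_rat | exact: IH | exact: gX].
have gpoly : forall p, trop_poly p -> Good p.
  move=> p [s hs]; have -> : p = bm s by apply: funext => x; rewrite hs.
  elim: s {hs} => [|mm s IH].
    have -> : bm [::] = @tcst n -oo by apply: funext => x; rewrite /bm big_nil.
    exact: gcst.
  have -> : bm (mm :: s) = tadd (mono mm.1 mm.2) (bm s).
    by apply: funext => x; rewrite /bm big_cons.
  apply: gadd => //; first by apply: poly_rat; apply: mono_poly.
    by apply: poly_rat; exists s.
  exact: (gmono _ _ _ erefl).
have grat : forall f, trop_rat f -> Good f.
  move=> f hf; have [p [q [hp hq hqr hfe]]] := rat_decomp hf.
  have hpq : tmul f q = p.
    apply: funext => x; rewrite /tmul hfe; have [r ->] := hqr x.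
    by rewrite subeK.
  have := Fy _ _ (phimul _ _ hf (poly_rat hq)); rewrite hpq /tmul.
  rewrite (gpoly _ hp) (gpoly _ hq) => e; rewrite /Good hfe e.
  by have [r ->] := hqr t; rewrite addeK.
exists t; split; last exact: grat.
move=> f g /[dup] /cE [hf hg] /phiE /Fy.
by rewrite (grat _ hf) (grat _ hg).
Qed.

Theorem corollary3p17 (n m : nat) (E : tfun n -> tfun n -> Prop)
    (F : tfun m -> tfun m -> Prop) (phi : tfun n -> tfun m) :
  congruence E -> congruence F -> talg_hom_quot E F phi ->
  (forall f : tfun n, trop_rat f ->
     ereal_sup [set phi f y | y in tvar F] <= ereal_sup [set f x | x in tvar E] /\
     ereal_inf [set f x | x in tvar E] <= ereal_inf [set phi f y | y in tvar F]) /\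
  (tvar F !=set0 -> hom_quot_injective E F phi ->
   (forall f g, F f g <-> tideal (tvar F) f g) ->
   forall f : tfun n, trop_rat f ->
     ereal_sup [set f x | x in tvar E] = ereal_sup [set phi f y | y in tvar F] /\
     ereal_inf [set f x | x in tvar E] = ereal_inf [set phi f y | y in tvar F]).
Proof.
move=> cE cF hom.
have part1 : forall f : tfun n, trop_rat f ->
     ereal_sup [set phi f y | y in tvar F] <= ereal_sup [set f x | x in tvar E] /\
     ereal_inf [set f x | x in tvar E] <= ereal_inf [set phi f y | y in tvar F].
  move=> f hf; split.
    apply: ge_ereal_sup => _ [y Wy <-].
    have [t [Vt ht]] := eval_point cE hom Wy.
    by rewrite ht //; apply: ereal_sup_ubound; exists t.
  apply: le_ereal_inf_tmp => _ [y Wy <-].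
  have [t [Vt ht]] := eval_point cE hom Wy.
  by rewrite ht //; apply: ereal_inf_lbound; exists t.
split => // -[y0 Wy0] inj hF f hf.
have [h1 h2] := part1 f hf.
case: hom => phirat phiE phiadd phimul phicst.
split; apply/eqP; rewrite eq_le ?h1 ?h2 ?andbT.
- set s := ereal_sup [set phi f y | y in tvar F].
  have [->|hs] := eqVneq s +oo; first exact: leey.
  have hs' : s <> +oo by move/eqP: hs.
  have key : E (tadd f (@tcst n s)) (@tcst n s).
    apply: inj; [exact: tadd_cst_rat | exact: cst_rat |].
    apply/hF; split; [apply: phirat; exact: tadd_cst_rat | apply: phirat; exact: cst_rat |].
    move=> y Wy.
    rewrite (Wy _ _ (phiadd _ _ hf (@cst_rat n _ hs'))) /tadd (Wy _ _ (phicst _ hs')) /tcst.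
    by apply: max_r; apply: ereal_sup_ubound; exists y.
  apply: ge_ereal_sup => _ [x Vx <-].
  have := Vx _ _ key; rewrite /tadd /tcst => <-.
  by rewrite le_max lexx.
- set s := ereal_inf [set phi f y | y in tvar F].
  have [->|hs] := eqVneq s -oo; first exact: leNye.
  have hs' : s <> +oo.
    move=> sinf; have : s <= phi f y0 by apply: ereal_inf_lbound; exists y0.
    rewrite sinf leye_eq => /eqP; exact: (rat_noninf (phirat _ hf)).
  have key : E (tadd f (@tcst n s)) f.
    apply: inj => //; first exact: tadd_cst_rat.
    apply/hF; split; [apply: phirat; exact: tadd_cst_rat | exact: phirat |].
    move=> y Wy.
    rewrite (Wy _ _ (phiadd _ _ hf (@cst_rat n _ hs'))) /tadd (Wy _ _ (phicst _ hs')) /tcst.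
    by apply: max_l; apply: ereal_inf_lbound; exists y.
  apply: le_ereal_inf_tmp => _ [x Vx <-].
  have := Vx _ _ key; rewrite /tadd /tcst => <-.
  by rewrite le_max lexx orbT.
Qed.
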